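(* Let $1\le k<n$. There exist real numbers $\lambda_0,\dots,\lambda_k$ depending only on $n$ and $k$ with the following property. Let $X_1,\dots,X_n$ be sets, $X=\prod_iX_i$, and let $F:X\to\mathbb{R}$ be a finite $(n,k)$-function. Fix $y\in X$ and for each $\beta\subseteq\{1,\dots,n\}$ define $F_\beta:X_\beta\to\mathbb{R}$ by $F_\beta(x_\beta)=F(x_\beta y_{\{1,\dots,n\}\setminus\beta})$ (so $F_\varnothing$ is the constant $F(y)$). For $\alpha\in\mathcal{I}_{nk}$ put $\widehat f_\alpha(x_\alpha)=\sum_{\beta\subseteq\alpha}\lambda_{|\beta|}F_\beta(x_\beta)$. Then $F(x)=\sum_{\alpha\in\mathcal{I}_{nk}}\widehat f_\alpha(x_\alpha)$ for every $x\in X$.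
   Context: $\mathcal{I}_{nk}$ is the family of $k$-element subsets of $\{1,\dots,n\}$; $X_\alpha=\prod_{i\in\alpha}X_i$; $x_\alpha$ is the projection of $x$ onto $X_\alpha$; for disjoint $\alpha,\beta$, $x_\alpha y_\beta$ denotes the point of $X_{\alpha\sqcup\beta}$ with coordinates from $x_\alpha$ and $y_\beta$. A function $F:X\to[-\infty,+\infty)$ is an $(n,k)$-function if $F(x)=\sum_{\alpha\in\mathcal{I}_{nk}}f_\alpha(x_\alpha)$ for all $x$ for some functions $f_\alpha:X_\alpha\to[-\infty,+\infty)$ (no regularity assumed); it is a finite $(n,k)$-function if moreover $F(x)>-\infty$ for all $x$ (equivalently all $f_\alpha$ are real-valued). *)

(* Defs.v *)
From Stdlib Require Import Reals.
From HB Require Import structures.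
From mathcomp Require Import all_boot all_order all_algebra.
From mathcomp Require Import Rstruct.
Set Implicit Arguments. Unset Strict Implicit. Unset Printing Implicit Defensive.
Import GRing.Theory.
Local Open Scope ring_scope.

(* Points of X = prod_{i<n} X_i are dependent functions x : forall i, X i.
   A function on X_alpha is represented as a function on X that depends only
   on the coordinates in alpha. *)
Definition depends_only_on (n : nat) (X : 'I_n -> Type) (alpha : {set 'I_n})
  (g : (forall i, X i) -> R) : Prop :=
  forall x x' : forall i, X i, (forall i, i \in alpha -> x i = x' i) -> g x = g x'.

Definition is_finite_nk_function (n k : nat) (X : 'I_n -> Type)
  (F : (forall i, X i) -> R) : Prop :=
  exists f : {set 'I_n} -> (forall i, X i) -> R,
    (forall alpha : {set 'I_n}, #|alpha| = k -> depends_only_on alpha (f alpha)) /\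
    (forall x, F x = \sum_(alpha : {set 'I_n} | #|alpha| == k) f alpha x).

Definition mixpt (n : nat) (X : 'I_n -> Type) (beta : {set 'I_n})
  (x y : forall i, X i) : forall i, X i :=
  fun i => if i \in beta then x i else y i.

(* Main.v *)
Require Import Defs.
From Stdlib Require Import Reals.
From HB Require Import structures.
From mathcomp Require Import all_boot all_order all_algebra.
From mathcomp Require Import Rstruct.
From mathcomp Require Import zify.
Import GRing.Theory Num.Theory.
Set Implicit Arguments. Unset Strict Implicit.
Local Open Scope ring_scope.

Lemma exists_u (m N : nat) : exists u : nat -> R, u 0%N = 1 /\
  forall i, (0 < i <= N)%N -> \sum_(0 <= e < i.+1) 'C(m,e)%:R * u (i - e)%N = 0.
Proof.
elim: N => [|N [u [u0 hu]]].
  by exists (fun _ => 1); split => // i /andP[a b]; exfalso; lia.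
pose S := \sum_(1 <= e < N.+2) 'C(m,e)%:R * u (N.+1 - e)%N.
exists (fun j => if j == N.+1 then - S else u j); split => // i /andP[i0 iN].
have [iN'|iN'] := leqP i N.
  rewrite -[RHS](hu i); last by rewrite i0 iN'.
  apply: eq_big_nat => e /andP[_ he].
  by have -> : (i - e == N.+1)%N = false by apply/negbTE; lia.
have -> : i = N.+1 by lia.
rewrite big_ltn // bin0 subn0 eqxx mul1r.
rewrite [X in _ + X](_ : _ = S) ?addNr //.
apply: eq_big_nat => e /andP[he _].
by have -> : (N.+1 - e == N.+1)%N = false by apply/negbTE; lia.
Qed.

Lemma sum_subsets_card (T : finType) (S : {set T}) (G : nat -> R) :
  \sum_(E : {set T} | E \subset S) G #|E| =
  \sum_(0 <= e < #|S|.+1) 'C(#|S|, e)%:R * G e.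
Proof.
rewrite big_mkord.
rewrite (partition_big (fun E : {set T} => inord #|E| : 'I_(#|S|.+1)) xpredT) //=.
apply: eq_bigr => e _.
rewrite (eq_bigr (fun _ => G e)); last first.
  move=> E /andP[sub /eqP <-]; rewrite inordK // ltnS; exact: subset_leq_card.
rewrite sumr_const -cards_draws mulr_natl; congr (_ *+ _).
apply: eq_card => E; rewrite !inE; apply/andP/andP => -[sub /eqP h]; split => //.
  by rewrite -h inordK // ltnS; exact: subset_leq_card.
by apply/eqP/val_inj; rewrite /= inordK // ?h // ltnS; exact: subset_leq_card.
Qed.

Lemma sum_split (n : nat) (g d : {set 'I_n}) (G : {set 'I_n} -> R) :
  d \subset g ->
  \sum_(b : {set 'I_n} | b :&: g == d) G b =
  \sum_(E : {set 'I_n} | E \subset ~: g) G (d :|: E).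
Proof.
move=> /subsetP dg.
rewrite (reindex_onto (fun E => d :|: E) (fun b => b :&: ~: g)); last first.
  move=> b /eqP <-; apply/setP => i; rewrite !inE.
  by case: (i \in b); case: (i \in g).
apply: eq_bigl => E; apply/andP/idP.
  by move=> [_ /eqP <-]; apply: subsetIr.
move=> /subsetP Eg; split; apply/eqP/setP => i; rewrite !inE;
  move: (dg i) (Eg i); rewrite !inE;
  case: (i \in d); case: (i \in E); case: (i \in g) => //= h1 h2;
  by [move: (h1 isT) | move: (h2 isT)].
Qed.

Lemma card_disjU (n : nat) (g d E : {set 'I_n}) :
  d \subset g -> E \subset ~: g -> #|d :|: E| = (#|d| + #|E|)%N.
Proof.
move=> /subsetP dg /subsetP Eg.
rewrite cardsU (_ : d :&: E = set0) ?cards0 ?subn0 //.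
apply/setP => i; rewrite !inE; move: (dg i) (Eg i); rewrite !inE.
case: (i \in d); case: (i \in E); case: (i \in g) => //= h1 h2;
  by [move: (h1 isT) | move: (h2 isT)].
Qed.

Lemma card_compl (n : nat) (g : {set 'I_n}) : #|~: g| = (n - #|g|)%N.
Proof. have := cardsC g; rewrite card_ord => h; lia. Qed.

Lemma count_super (n k : nat) (b : {set 'I_n}) : (k <= n)%N ->
  \sum_(a : {set 'I_n} | (#|a| == k) && (b \subset a)) (1 : R) =
  if (#|b| <= k)%N then 'C(n - #|b|, k - #|b|)%:R else 0.
Proof.
move=> kn.
transitivity (\sum_(a : {set 'I_n} | a :&: b == b) ((#|a| == k)%:R : R)).
  rewrite big_mkcond [RHS]big_mkcond; apply: eq_bigr => a _.
  have -> : (a :&: b == b) = (b \subset a) by apply/eqP/setIidPr.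
  by case: (#|a| == k); case: (b \subset a).
rewrite sum_split //.
under eq_bigr => E Eb do rewrite (card_disjU (subxx b) Eb).
rewrite (@sum_subsets_card _ (~: b) (fun e => ((#|b| + e == k)%N%:R : R))).
rewrite card_compl.
have [bk|bk] := leqP #|b| k.
  rewrite (eq_bigr (fun e => if e == (k - #|b|)%N then 'C(n - #|b|, k - #|b|)%:R else 0)); last first.
    move=> e _; have -> : (#|b| + e == k) = (e == k - #|b|)%N by apply/eqP/eqP; lia.
    by case: eqP => [->|]; rewrite ?mulr1 ?mulr0.
  rewrite -big_mkcond big_nat1_eq.
  by have -> : (0 <= k - #|b| < (n - #|b|).+1)%N by lia.
rewrite big1 // => e _.
have -> : (#|b| + e == k) = false by apply/negbTE; lia.
by rewrite mulr0.
Qed.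

Definition W (n k : nat) (lam : nat -> R) (j : nat) : R :=
  ((if (j <= k)%N then 'C(n - j, k - j)%:R else 0) * lam j)%R.

Lemma key (n k : nat) (lam : nat -> R) (g : {set 'I_n}) (h : {set 'I_n} -> R) :
  (k <= n)%N -> #|g| = k ->
  (forall d, (d <= k)%N ->
     \sum_(0 <= e < (n - k).+1) 'C(n - k, e)%:R * W n k lam (d + e) = (d == k)%:R) ->
  \sum_(a : {set 'I_n} | #|a| == k)
     \sum_(b : {set 'I_n} | b \subset a) lam #|b| * h (b :&: g) = h g.
Proof.
move=> kn hg hyp.
rewrite (exchange_big_dep xpredT) //=.
rewrite (eq_bigr (fun b : {set 'I_n} => W n k lam #|b| * h (b :&: g))); last first.
  move=> b _.
  rewrite (eq_bigr (fun a => 1 * (lam #|b| * h (b :&: g)))); last by move=> *; rewrite mul1r.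
  by rewrite -big_distrl /= count_super // /W mulrA.
rewrite (partition_big (fun b : {set 'I_n} => b :&: g) (fun d : {set 'I_n} => d \subset g)) /=; last first.
  by move=> b _; apply: subsetIr.
rewrite (eq_bigr (fun d : {set 'I_n} => (#|d| == k)%:R * h d)); last first.
  move=> d dg.
  rewrite (eq_bigr (fun b : {set 'I_n} => W n k lam #|b| * h d)); last by move=> b /eqP ->.
  rewrite -big_distrl /=; congr (_ * _).
  rewrite (eq_bigl (fun b : {set 'I_n} => b :&: g == d)) // sum_split //.
  rewrite (eq_bigr (fun E : {set 'I_n} => W n k lam (#|d| + #|E|))); last first.
    by move=> E Eg; rewrite (card_disjU dg Eg).
  rewrite (@sum_subsets_card _ (~: g) (fun e => W n k lam (#|d| + e))).
  rewrite card_compl hg; apply: hyp.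
  by rewrite -hg; apply: subset_leq_card.
rewrite (bigD1 g) //= hg eqxx mul1r big1 ?addr0 // => d /andP[dg dng].
have : (#|d| < #|g|)%N by apply: proper_card; rewrite properEneq dng.
rewrite hg => lt; have -> : (#|d| == k) = false by apply/negbTE; lia.
by rewrite mul0r.
Qed.

Lemma hyp_u (n k : nat) (u : nat -> R) :
  (k < n)%N -> u 0%N = 1 ->
  (forall i, (0 < i <= k)%N -> \sum_(0 <= e < i.+1) 'C(n - k, e)%:R * u (i - e)%N = 0) ->
  forall d, (d <= k)%N ->
  \sum_(0 <= e < (n - k).+1) 'C(n - k, e)%:R *
     W n k (fun j => if (j <= k)%N then u (k - j)%N / 'C(n - j, k - j)%:R else 0) (d + e)
  = (d == k)%:R.
Proof.
move=> kn u0 hu d dk.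
set m := (n - k)%N; set i := (k - d)%N.
have Wv : forall j, W n k (fun j => if (j <= k)%N then u (k - j)%N / 'C(n - j, k - j)%:R else 0) j
   = if (j <= k)%N then u (k - j)%N else 0.
  move=> j; rewrite /W; case: ifP => jk; last by rewrite mul0r.
  have Cn0 : ('C(n - j, k - j)%:R : R) != 0 by rewrite pnatr_eq0 -lt0n bin_gt0; lia.
  by rewrite mulrC -mulrA mulVf ?mulr1.
have hu' : \sum_(0 <= e < i.+1) 'C(m, e)%:R * u (i - e)%N = (i == 0%N)%:R.
  have [i0|ip] := posnP i.
    by rewrite i0 big_nat1 bin0 subn0 u0 mulr1.
  rewrite hu; last by rewrite ip /i; lia.
  done.
have -> : (d == k) = (i == 0%N) by apply/eqP/eqP; rewrite /i; lia.
rewrite -hu'.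
rewrite (@big_nat_widen _ _ _ 0 m.+1 (m + i).+1) ?ltnS ?leq_addr //.
rewrite [RHS](@big_nat_widen _ _ _ 0 i.+1 (m + i).+1) ?ltnS ?leq_addl //.
rewrite big_mkcond [RHS]big_mkcond; apply: eq_big_nat => e _.
rewrite Wv.
case: (ltnP e m.+1) => em; case: (ltnP e i.+1) => ei /=.
- have -> : (d + e <= k)%N by rewrite /i in ei; lia.
  by have -> : (k - (d + e) = i - e)%N by rewrite /i; lia.
- have -> : (d + e <= k)%N = false by apply/negbTE; rewrite /i in ei; lia.
  by rewrite mulr0.
- by rewrite bin_small // mul0r.
- by [].
Qed.

Theorem mainTheorem8 (n k : nat) :
  (1 <= k < n)%N ->
  exists lam : nat -> R,
    forall (X : 'I_n -> Type) (F : (forall i, X i) -> R),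
      is_finite_nk_function k F ->
      forall y x : forall i, X i,
        F x = \sum_(alpha : {set 'I_n} | #|alpha| == k)
                \sum_(beta : {set 'I_n} | beta \subset alpha)
                   lam #|beta| * F (mixpt beta x y).
Proof.
move=> /andP[k1 kn].
have [u [u0 hu]] := exists_u (n - k) k.
pose lam := fun j => if (j <= k)%N then u (k - j)%N / 'C(n - j, k - j)%:R else 0.
exists lam => X F [f [fdep fF]] y x.
have hyp := hyp_u kn u0 hu.
rewrite fF; symmetry.
under eq_bigr => a _ do under eq_bigr => b _ do rewrite fF mulr_sumr.
under eq_bigr => a _ do rewrite exchange_big.
rewrite exchange_big /=.
apply: eq_bigr => g /eqP hg.
have dep := fdep g hg.
transitivity (\sum_(a : {set 'I_n} | #|a| == k) \sum_(b : {set 'I_n} | b \subset a)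
   lam #|b| * (fun d => f g (mixpt d x y)) (b :&: g)).
  apply: eq_bigr => a _; apply: eq_bigr => b _; congr (_ * _).
  by apply: dep => i ig; rewrite /mixpt inE ig andbT.
rewrite (@key n k lam g (fun d => f g (mixpt d x y)) (ltnW kn) hg hyp).
by apply: dep => i ig; rewrite /mixpt ig.
Qed.
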